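(* Let $1\le p\le\frac{\log 3}{\log 2}$ and let $\epsilon_1,\epsilon_2,\epsilon_3$ be acute angles with $\epsilon_1+\epsilon_2+\epsilon_3=\frac{\pi}{2}$. Then $\sum_{i=1}^3\sin^p\epsilon_i\ge 1$. *)

(* Defs.v *)
From Stdlib Require Import Reals.

(* Main.v *)
Require Import Defs.
From Stdlib Require Import Reals Lra Psatz ZArith.
Open Scope R_scope.

Lemma bernoulli (a w : R) : 0 < a -> 0 <= w <= 1 -> Rpower a w <= 1 + w*(a-1).
Proof.
  intros Ha Hw. unfold Rpower.
  assert (HaL: exp (ln a) = a) by (apply exp_ln; lra).
  set (L := ln a) in *.
  set (m := exp (w*L)).
  assert (Hm: 0 < m) by apply exp_pos.
  assert (H1: exp ((1-w)*L) >= 1 + (1-w)*L) by (pose proof exp_ineq1_le ((1-w)*L); lra).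
  assert (H2: exp (-(w*L)) >= 1 - w*L) by (pose proof exp_ineq1_le (-(w*L)); lra).
  assert (E1: exp ((1-w)*L) * m = a).
  { unfold m. rewrite <- exp_plus. rewrite <- HaL. f_equal. ring. }
  assert (E2: exp (-(w*L)) * m = 1).
  { unfold m. rewrite <- exp_plus. replace (-(w*L) + w*L) with 0 by ring. apply exp_0. }
  assert (H3: w * exp ((1-w)*L) + (1-w) * exp (-(w*L)) >= 1) by nra.
  nra.
Qed.

Definition qq := ln 3 / ln 2.
Definition rr := 2 - qq.

Lemma ln2_pos : 0 < ln 2.
Proof. rewrite <- ln_1. apply ln_increasing; lra. Qed.

Lemma Rpow2_qq : Rpower 2 qq = 3.
Proof.
  unfold Rpower, qq. replace (ln 3 / ln 2 * ln 2) with (ln 3).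
  - apply exp_ln; lra.
  - field. apply Rgt_not_eq, ln2_pos.
Qed.

Lemma Rpower_2 (x : R) : 0 < x -> Rpower x 2 = x*x.
Proof. intros. replace 2 with (INR 2) by (simpl; ring). rewrite Rpower_pow by lra. simpl; ring. Qed.

Lemma Rpow2_rr : Rpower 2 rr = 4/3.
Proof.
  unfold rr. unfold Rminus. rewrite Rpower_plus, Rpower_Ropp, Rpow2_qq, Rpower_2 by lra. field.
Qed.

Lemma Rpow4_rr : Rpower 4 rr = 16/9.
Proof.
  replace 4 with (2*2) by ring. rewrite <- Rpower_mult_distr by lra. rewrite Rpow2_rr. field.
Qed.

Lemma Rpower_pown (x : R) (n : nat) : 0 < x -> Rpower x (INR n) = x ^ n.
Proof. intros; apply Rpower_pow; auto. Qed.



Lemma rr_lo : 127/306 < rr.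
Proof.
  destruct (Rlt_le_dec (127/306) rr) as [H|H]; auto. exfalso.
  assert (A: Rpower 2 rr <= Rpower 2 (127/306)) by (apply Rle_Rpower; lra).
  rewrite Rpow2_rr in A.
  assert (B: Rpower (Rpower 2 (127/306)) (INR 306) = 2 ^ 127).
  { rewrite Rpower_mult. replace (127/306 * INR 306) with (INR 127) by (simpl; field).
    apply Rpower_pow; lra. }
  rewrite Rpower_pow in B by (apply exp_pos).
  assert (C: (4/3)^306 <= Rpower 2 (127/306) ^ 306) by (apply pow_incr; lra).
  rewrite B in C.
  assert (C2: (4/3)^306 * 3^306 <= 2^127 * 3^306).
  { apply Rmult_le_compat_r; auto. apply pow_le; lra. }
  rewrite <- Rpow_mult_distr in C2. replace (4/3*3) with 4 in C2 by field.
  assert (E: (2^(Z.of_nat 127) * 3^(Z.of_nat 306) < 4^(Z.of_nat 306))%Z) by (vm_compute; reflexivity).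
  apply IZR_lt in E. rewrite mult_IZR, <- !pow_IZR in E.
  lra.
Qed.

Lemma rr_hi : rr < 22/53.
Proof.
  destruct (Rlt_le_dec rr (22/53)) as [H|H]; auto. exfalso.
  assert (A: Rpower 2 (22/53) <= Rpower 2 rr) by (apply Rle_Rpower; lra).
  rewrite Rpow2_rr in A.
  assert (B: Rpower (Rpower 2 (22/53)) (INR 53) = 2 ^ 22).
  { rewrite Rpower_mult. replace (22/53 * INR 53) with (INR 22) by (simpl; field).
    apply Rpower_pow; lra. }
  rewrite Rpower_pow in B by (apply exp_pos).
  assert (C: Rpower 2 (22/53) ^ 53 <= (4/3)^53) by (apply pow_incr; split; [left; apply exp_pos| lra]).
  rewrite B in C.
  assert (C2: 2^22 * 3^53 <= (4/3)^53 * 3^53).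
  { apply Rmult_le_compat_r; auto. apply pow_le; lra. }
  rewrite <- Rpow_mult_distr in C2. replace (4/3*3) with 4 in C2 by field.
  assert (E: (4^(Z.of_nat 53) < 2^(Z.of_nat 22) * 3^(Z.of_nat 53))%Z) by (vm_compute; reflexivity).
  apply IZR_lt in E. rewrite mult_IZR, <- !pow_IZR in E.
  lra.
Qed.

Lemma anchor (t c K : R) : 0 < t < 1 -> 0 < c -> Rpower c rr = K ->
  Rpower t qq * (1 + rr*(c*t-1)) >= K * (t*t).
Proof.
  intros Ht Hc HK. pose proof rr_lo. pose proof rr_hi.
  assert (Hq: qq = 2 - rr) by (unfold rr; ring).
  assert (S: Rpower t qq * Rpower t rr = t*t).
  { rewrite <- Rpower_plus. replace (qq+rr) with 2 by (unfold rr; ring). apply Rpower_2; lra. }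
  assert (M: Rpower c rr * Rpower t rr = Rpower (c*t) rr) by (apply Rpower_mult_distr; lra).
  assert (Bn: Rpower (c*t) rr <= 1 + rr*(c*t-1)) by (apply bernoulli; [nra|lra]).
  assert (P1: 0 < Rpower t qq) by apply exp_pos.
  assert (P2: 0 < Rpower t rr) by apply exp_pos.
  rewrite HK in M.
  assert (K*(t*t) = Rpower t qq * Rpower (c*t) rr) by (rewrite <- M, <- S; ring).
  rewrite H1. apply Rle_ge. apply Rmult_le_compat_l; lra.
Qed.


Lemma hbound (x : R) : 0 < x < 1 -> Rpower x qq >= 1 - (2-rr)*(1-x).
Proof.
  intros Hx. pose proof rr_lo. pose proof rr_hi.
  assert (K1: Rpower 1 rr = 1) by (unfold Rpower; rewrite ln_1, Rmult_0_r; apply exp_0).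
  pose proof (anchor x 1 1 Hx ltac:(lra) K1) as A.
  assert (P: 0 < Rpower x qq) by apply exp_pos.
  assert (D: 0 < 1 + rr*(1*x-1) <= 1) by nra.
  assert (x*x - (1 + rr*(1*x-1)) * (1 - (2-rr)*(1-x)) = ((1-rr)*(1-x))^2) by ring.
  assert (0 <= ((1-rr)*(1-x))^2) by apply pow2_ge_0.
  destruct (Rle_dec (Rpower x qq) (1 - (2-rr)*(1-x))); [|lra].
  nra.
Qed.

Lemma gsmall (y : R) : 0 < y <= 29/100 -> Rpower y qq >= (2-rr)*(y*y).
Proof.
  intros Hy. pose proof rr_lo. pose proof rr_hi.
  assert (Hy1: 0 < y < 1) by lra.
  pose proof (anchor y 2 (4/3) Hy1 ltac:(lra) Rpow2_rr) as A.
  assert (D: 0 < 1 + rr*(2*y-1) <= 826/1000) by nra.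
  assert (P: 0 < Rpower y qq) by apply exp_pos.
  nra.
Qed.

Lemma corner (x y z : R) : 0 < x < 1 -> 0 < y <= 29/100 -> 0 < z <= 29/100 ->
  x*x+y*y+z*z+2*x*y*z = 1 ->
  Rpower x qq + Rpower y qq + Rpower z qq >= 1.
Proof.
  intros Hx Hy Hz C. pose proof rr_lo. pose proof rr_hi.
  pose proof (hbound x Hx). pose proof (gsmall y Hy). pose proof (gsmall z Hz).
  assert (1 - x <= y*y + z*z).
  { assert (0 <= x*((y-z)*(y-z))) by (apply Rmult_le_pos; [lra | apply Rle_0_sqr]).
   
    assert ((1-x)*(1+x) <= (1+x)*(y*y+z*z)) by lra.
    apply (Rmult_le_reg_r (1+x)); nra. }
  nra.
Qed.


Lemma p_le (x y z : R) : 0 < x < 1 -> 0 < y < 1 -> 0 < z < 1 ->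
  x*x+y*y+z*z+2*x*y*z = 1 -> x+y+z <= 3/2.
Proof.
  intros Hx Hy Hz C.
  assert (E: (z + x*y)^2 = (1-x*x)*(1-y*y)) by nra.
  assert (F: (1-x*y)^2 - (z+x*y)^2 = (x-y)^2) by (rewrite E; ring).
  assert (G: z + x*y <= 1 - x*y).
  { assert (0 <= (x-y)^2) by apply pow2_ge_0. nra. }
  assert (H: (x+y)^2 <= 2*(1-z)) by nra.
  assert (0 <= (z-1/2)^2) by apply pow2_ge_0.
  nra.
Qed.

Lemma p_ge (x y z : R) : 0 < x < 1 -> 0 < y < 1 -> 0 < z < 1 ->
  x*x+y*y+z*z+2*x*y*z = 1 -> 1 <= x+y+z.
Proof.
  intros Hx Hy Hz C.
  assert (0 < x*y) by (apply Rmult_lt_0_compat; lra).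
  assert (0 <= x*y*(1-z)) by (apply Rmult_le_pos; lra).
  assert (0 < y*z) by (apply Rmult_lt_0_compat; lra).
  assert (1 <= (x+y+z)^2) by nra. nra.
Qed.

Lemma tparam (p : R) : 1 <= p <= 3/2 -> exists t, 0 <= t <= 1/2 /\ p = 1 + 2*t - 2*t*t.
Proof.
  intros Hp. set (s := sqrt (3 - 2*p)).
  assert (Hs: s*s = 3 - 2*p) by (apply sqrt_sqrt; lra).
  assert (Hs0: 0 <= s) by apply sqrt_pos.
  exists ((1 - s)/2). split; [split|]; nra.
Qed.

Lemma w_le (x y z t : R) : 0 < x < 1 -> 0 < y < 1 -> 0 < z < 1 ->
  x*x+y*y+z*z+2*x*y*z = 1 -> 0 <= t <= 1/2 -> x+y+z = 1 + 2*t - 2*t*t ->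
  x*y*z <= t*t*(1-2*t*t).
Proof.
  intros Hx Hy Hz C Ht Hp.
  set (p := x+y+z) in *. set (q2 := x*y+y*z+z*x). set (w := x*y*z).
  assert (Hq2 : q2 = (p*p - 1 + 2*w)/2) by (unfold q2, p, w; lra).
  assert (D: ((x-y)*(y-z)*(z-x))^2 = p*p*q2*q2 - 4*q2^3 - 4*p^3*w + 18*p*q2*w - 27*w*w)
    by (unfold p, q2, w; ring).
  rewrite Hq2, Hp in D.
  assert (Hw: 0 < w) by (unfold w; apply Rmult_lt_0_compat; [apply Rmult_lt_0_compat|]; lra).
  clearbody p q2 w.
  set (w1 := t*t*(1-2*t*t)). set (w2 := (1-t)*(1-t)*(1-2*(1-t)*(1-t))).
  set (w3 := -((1+t-t*t)^2)).
  assert (D2: ((x-y)*(y-z)*(z-x))^2 = -4*(w-w1)*(w-w2)*(w-w3)).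
  { rewrite D. unfold w1, w2, w3. field. }
  assert (Hw12: w2 <= w1).
  { assert (w1 - w2 = (1-2*t)^3) by (unfold w1, w2; ring).
    assert (0 <= (1-2*t)^3) by (apply pow_le; lra). lra. }
  assert (Hw3: w3 < 0).
  { unfold w3. assert (0 < (1+t-t*t)^2) by (apply pow_lt; nra). lra. }
  destruct (Rle_dec w w1) as [|Hgt]; [assumption|]. exfalso.
  assert (0 <= ((x-y)*(y-z)*(z-x))^2) by apply pow2_ge_0.
  assert (0 < (w-w1)*(w-w2)) by (apply Rmult_lt_0_compat; lra).
  assert (0 < (w-w1)*(w-w2)*(w-w3)) by (apply Rmult_lt_0_compat; lra).
  lra.
Qed.

Lemma sym_cubic (a0 a1 a2 a3 x y z t : R) :
  x*x+y*y+z*z+2*x*y*z = 1 -> x+y+z = 1 + 2*t - 2*t*t ->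
  (a0 + a1*x + a2*(x*x) + a3*(x*x*x)) + (a0 + a1*y + a2*(y*y) + a3*(y*y*y))
  + (a0 + a1*z + a2*(z*z) + a3*(z*z*z)) =
  (a0 + a1*(1-2*t*t) + a2*((1-2*t*t)*(1-2*t*t)) + a3*((1-2*t*t)*(1-2*t*t)*(1-2*t*t)))
  + 2*(a0 + a1*t + a2*(t*t) + a3*(t*t*t))
  + (t*t*(1-2*t*t) - x*y*z) * (2*a2 + 3*a3*((x+y+z)-1)).
Proof.
  intros C Hp.
  set (p := x+y+z) in *. set (w := x*y*z).
  assert (E2: x*x+y*y+z*z = 1 - 2*w) by (unfold w; lra).
  assert (E3: x*x*x+y*y*y+z*z*z = -(p*p*p)/2 + 3*p/2 + 3*w*(1-p)).
  { assert (x*x*x+y*y*y+z*z*z - (-(p*p*p)/2 + 3*p/2 + 3*w*(1-p)) = (3*p/2)*(x*x+y*y+z*z+2*x*y*z - 1))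
      by (unfold p, w; field).
    rewrite C in H. lra. }
  transitivity (3*a0 + a1*p + a2*(x*x+y*y+z*z) + a3*(x*x*x+y*y*y+z*z*z)).
  { unfold p; ring. }
  rewrite E2, E3. clearbody p w. subst p. field.
Qed.

Lemma two_big (x y z : R) : 29/100 <= x < 1 -> 29/100 <= y < 1 -> 0 < z < 1 ->
  x*x+y*y+z*z+2*x*y*z = 1 -> 124/100 <= x+y+z.
Proof.
  intros Hx Hy Hz C.
  destruct (Rle_dec (124/100) (x+y)) as [|Hs]; [lra|].
  set (s := x+y) in *. set (m := x*y).
  assert (Hm: m >= 29/100 * s - 841/10000) by (unfold m, s; nra).
  assert (E: (z+m)^2 = (1+m)^2 - s^2) by (unfold m, s; nra).
  assert (B: 0 < 124/100 - s + m) by (unfold m; nra).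
  assert (K: (z+m)^2 - (124/100 - s + m)^2 = 2*(m*(s-24/100) - (s-28/100)*(s-96/100))) by (rewrite E; field).
  assert (K2: 0 <= m*(s-24/100) - (s-28/100)*(s-96/100)).
  { assert (s >= 58/100) by (unfold s; lra).
    assert (m*(s-24/100) >= (29/100*s - 841/10000)*(s-24/100)) by nra.
    nra. }
  assert (0 <= z + m) by (unfold m; nra).
  nra.
Qed.

Lemma LA_p0l (s : R) : (0) <= s <= (7/20) -> 0 <= ((6623/612000)*1 + (-10899/68000)*s + (1208879/1530000)*s*s + (-1871069/1530000)*s*s*s + (889/7500)*s*s*s*s).
Proof. intros.
destruct (Rle_dec s (7/40)).
{ assert (0 <= s - (0)) by lra. assert (0 <= (7/40) - s) by lra.
assert (0 <= (s-(0))^0 * ((7/40)-s)^4) by (apply Rmult_le_pos; apply pow_le; lra).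
assert (0 <= (s-(0))^1 * ((7/40)-s)^3) by (apply Rmult_le_pos; apply pow_le; lra).
assert (0 <= (s-(0))^2 * ((7/40)-s)^2) by (apply Rmult_le_pos; apply pow_le; lra).
assert (0 <= (s-(0))^3 * ((7/40)-s)^1) by (apply Rmult_le_pos; apply pow_le; lra).
assert (0 <= (s-(0))^4 * ((7/40)-s)^0) by (apply Rmult_le_pos; apply pow_le; lra).
lra. }
{ assert (0 <= s - (7/40)) by lra. assert (0 <= (7/20) - s) by lra.
assert (0 <= (s-(7/40))^0 * ((7/20)-s)^4) by (apply Rmult_le_pos; apply pow_le; lra).
assert (0 <= (s-(7/40))^1 * ((7/20)-s)^3) by (apply Rmult_le_pos; apply pow_le; lra).
assert (0 <= (s-(7/40))^2 * ((7/20)-s)^2) by (apply Rmult_le_pos; apply pow_le; lra).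
assert (0 <= (s-(7/40))^3 * ((7/20)-s)^1) by (apply Rmult_le_pos; apply pow_le; lra).
assert (0 <= (s-(7/40))^4 * ((7/20)-s)^0) by (apply Rmult_le_pos; apply pow_le; lra).
lra. }
Qed.

Lemma LA_p0h (s : R) : (0) <= s <= (7/20) -> 0 <= ((1147/106000)*1 + (-16987/106000)*s + (1884349/2385000)*s*s + (-2593/2120)*s*s*s + (3927/33125)*s*s*s*s).
Proof. intros.
destruct (Rle_dec s (7/40)).
{ assert (0 <= s - (0)) by lra. assert (0 <= (7/40) - s) by lra.
assert (0 <= (s-(0))^0 * ((7/40)-s)^4) by (apply Rmult_le_pos; apply pow_le; lra).
assert (0 <= (s-(0))^1 * ((7/40)-s)^3) by (apply Rmult_le_pos; apply pow_le; lra).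
assert (0 <= (s-(0))^2 * ((7/40)-s)^2) by (apply Rmult_le_pos; apply pow_le; lra).
assert (0 <= (s-(0))^3 * ((7/40)-s)^1) by (apply Rmult_le_pos; apply pow_le; lra).
assert (0 <= (s-(0))^4 * ((7/40)-s)^0) by (apply Rmult_le_pos; apply pow_le; lra).
lra. }
{ assert (0 <= s - (7/40)) by lra. assert (0 <= (7/20) - s) by lra.
assert (0 <= (s-(7/40))^0 * ((7/20)-s)^4) by (apply Rmult_le_pos; apply pow_le; lra).
assert (0 <= (s-(7/40))^1 * ((7/20)-s)^3) by (apply Rmult_le_pos; apply pow_le; lra).
assert (0 <= (s-(7/40))^2 * ((7/20)-s)^2) by (apply Rmult_le_pos; apply pow_le; lra).
assert (0 <= (s-(7/40))^3 * ((7/20)-s)^1) by (apply Rmult_le_pos; apply pow_le; lra).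
assert (0 <= (s-(7/40))^4 * ((7/20)-s)^0) by (apply Rmult_le_pos; apply pow_le; lra).
lra. }
Qed.

Lemma LA_p1l (s : R) : (7/20) <= s <= (141/200) -> 0 <= ((6623/612000)*1 + (-107489/612000)*s + (27751/45000)*s*s + (-903583/1530000)*s*s*s + (889/15000)*s*s*s*s).
Proof. intros.
assert (0 <= s - (7/20)) by lra. assert (0 <= (141/200) - s) by lra.
assert (0 <= (s-(7/20))^0 * ((141/200)-s)^4) by (apply Rmult_le_pos; apply pow_le; lra).
assert (0 <= (s-(7/20))^1 * ((141/200)-s)^3) by (apply Rmult_le_pos; apply pow_le; lra).
assert (0 <= (s-(7/20))^2 * ((141/200)-s)^2) by (apply Rmult_le_pos; apply pow_le; lra).
assert (0 <= (s-(7/20))^3 * ((141/200)-s)^1) by (apply Rmult_le_pos; apply pow_le; lra).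
assert (0 <= (s-(7/20))^4 * ((141/200)-s)^0) by (apply Rmult_le_pos; apply pow_le; lra).
lra.
Qed.

Lemma LA_p1h (s : R) : (7/20) <= s <= (141/200) -> 0 <= ((1147/106000)*1 + (-3723/21200)*s + (490273/795000)*s*s + (-156529/265000)*s*s*s + (3927/66250)*s*s*s*s).
Proof. intros.
assert (0 <= s - (7/20)) by lra. assert (0 <= (141/200) - s) by lra.
assert (0 <= (s-(7/20))^0 * ((141/200)-s)^4) by (apply Rmult_le_pos; apply pow_le; lra).
assert (0 <= (s-(7/20))^1 * ((141/200)-s)^3) by (apply Rmult_le_pos; apply pow_le; lra).
assert (0 <= (s-(7/20))^2 * ((141/200)-s)^2) by (apply Rmult_le_pos; apply pow_le; lra).
assert (0 <= (s-(7/20))^3 * ((141/200)-s)^1) by (apply Rmult_le_pos; apply pow_le; lra).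
assert (0 <= (s-(7/20))^4 * ((141/200)-s)^0) by (apply Rmult_le_pos; apply pow_le; lra).
lra.
Qed.

Lemma LA_p2l (s : R) : (141/200) <= s <= (1) -> 0 <= ((6623/612000)*1 + (-9349/51000)*s + (427241/1020000)*s*s + (-5248/19125)*s*s*s + (889/30000)*s*s*s*s).
Proof. intros.
assert (0 <= s - (141/200)) by lra. assert (0 <= (1) - s) by lra.
assert (0 <= (s-(141/200))^0 * ((1)-s)^4) by (apply Rmult_le_pos; apply pow_le; lra).
assert (0 <= (s-(141/200))^1 * ((1)-s)^3) by (apply Rmult_le_pos; apply pow_le; lra).
assert (0 <= (s-(141/200))^2 * ((1)-s)^2) by (apply Rmult_le_pos; apply pow_le; lra).
assert (0 <= (s-(141/200))^3 * ((1)-s)^1) by (apply Rmult_le_pos; apply pow_le; lra).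
assert (0 <= (s-(141/200))^4 * ((1)-s)^0) by (apply Rmult_le_pos; apply pow_le; lra).
lra.
Qed.

Lemma LA_p2h (s : R) : (141/200) <= s <= (1) -> 0 <= ((1147/106000)*1 + (-19429/106000)*s + (55503/132500)*s*s + (-72731/265000)*s*s*s + (3927/132500)*s*s*s*s).
Proof. intros.
assert (0 <= s - (141/200)) by lra. assert (0 <= (1) - s) by lra.
assert (0 <= (s-(141/200))^0 * ((1)-s)^4) by (apply Rmult_le_pos; apply pow_le; lra).
assert (0 <= (s-(141/200))^1 * ((1)-s)^3) by (apply Rmult_le_pos; apply pow_le; lra).
assert (0 <= (s-(141/200))^2 * ((1)-s)^2) by (apply Rmult_le_pos; apply pow_le; lra).
assert (0 <= (s-(141/200))^3 * ((1)-s)^1) by (apply Rmult_le_pos; apply pow_le; lra).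
assert (0 <= (s-(141/200))^4 * ((1)-s)^0) by (apply Rmult_le_pos; apply pow_le; lra).
lra.
Qed.

Lemma LB_p0l (s : R) : (0) <= s <= (7/20) -> 0 <= ((8413/170000)*1 + (-778661/3060000)*s + (271537/510000)*s*s + (-178931/382500)*s*s*s + (-30988/95625)*s*s*s*s).
Proof. intros.
assert (0 <= s - (0)) by lra. assert (0 <= (7/20) - s) by lra.
assert (0 <= (s-(0))^0 * ((7/20)-s)^4) by (apply Rmult_le_pos; apply pow_le; lra).
assert (0 <= (s-(0))^1 * ((7/20)-s)^3) by (apply Rmult_le_pos; apply pow_le; lra).
assert (0 <= (s-(0))^2 * ((7/20)-s)^2) by (apply Rmult_le_pos; apply pow_le; lra).
assert (0 <= (s-(0))^3 * ((7/20)-s)^1) by (apply Rmult_le_pos; apply pow_le; lra).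
assert (0 <= (s-(0))^4 * ((7/20)-s)^0) by (apply Rmult_le_pos; apply pow_le; lra).
lra.
Qed.

Lemma LB_p0h (s : R) : (0) <= s <= (7/20) -> 0 <= ((13113/265000)*1 + (-134833/530000)*s + (1269469/2385000)*s*s + (-15497/33125)*s*s*s + (-10736/33125)*s*s*s*s).
Proof. intros.
assert (0 <= s - (0)) by lra. assert (0 <= (7/20) - s) by lra.
assert (0 <= (s-(0))^0 * ((7/20)-s)^4) by (apply Rmult_le_pos; apply pow_le; lra).
assert (0 <= (s-(0))^1 * ((7/20)-s)^3) by (apply Rmult_le_pos; apply pow_le; lra).
assert (0 <= (s-(0))^2 * ((7/20)-s)^2) by (apply Rmult_le_pos; apply pow_le; lra).
assert (0 <= (s-(0))^3 * ((7/20)-s)^1) by (apply Rmult_le_pos; apply pow_le; lra).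
assert (0 <= (s-(0))^4 * ((7/20)-s)^0) by (apply Rmult_le_pos; apply pow_le; lra).
lra.
Qed.

Lemma LB_p1l (s : R) : (7/20) <= s <= (141/200) -> 0 <= ((8413/170000)*1 + (-198709/612000)*s + (247997/382500)*s*s + (-222607/765000)*s*s*s + (-15494/95625)*s*s*s*s).
Proof. intros.
destruct (Rle_dec s (211/400)).
{ assert (0 <= s - (7/20)) by lra. assert (0 <= (211/400) - s) by lra.
assert (0 <= (s-(7/20))^0 * ((211/400)-s)^4) by (apply Rmult_le_pos; apply pow_le; lra).
assert (0 <= (s-(7/20))^1 * ((211/400)-s)^3) by (apply Rmult_le_pos; apply pow_le; lra).
assert (0 <= (s-(7/20))^2 * ((211/400)-s)^2) by (apply Rmult_le_pos; apply pow_le; lra).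
assert (0 <= (s-(7/20))^3 * ((211/400)-s)^1) by (apply Rmult_le_pos; apply pow_le; lra).
assert (0 <= (s-(7/20))^4 * ((211/400)-s)^0) by (apply Rmult_le_pos; apply pow_le; lra).
lra. }
{ assert (0 <= s - (211/400)) by lra. assert (0 <= (141/200) - s) by lra.
assert (0 <= (s-(211/400))^0 * ((141/200)-s)^4) by (apply Rmult_le_pos; apply pow_le; lra).
assert (0 <= (s-(211/400))^1 * ((141/200)-s)^3) by (apply Rmult_le_pos; apply pow_le; lra).
assert (0 <= (s-(211/400))^2 * ((141/200)-s)^2) by (apply Rmult_le_pos; apply pow_le; lra).
assert (0 <= (s-(211/400))^3 * ((141/200)-s)^1) by (apply Rmult_le_pos; apply pow_le; lra).
assert (0 <= (s-(211/400))^4 * ((141/200)-s)^0) by (apply Rmult_le_pos; apply pow_le; lra).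
lra. }
Qed.

Lemma LB_p1h (s : R) : (7/20) <= s <= (141/200) -> 0 <= ((13113/265000)*1 + (-172057/530000)*s + (515389/795000)*s*s + (-19279/66250)*s*s*s + (-5368/33125)*s*s*s*s).
Proof. intros.
destruct (Rle_dec s (211/400)).
{ assert (0 <= s - (7/20)) by lra. assert (0 <= (211/400) - s) by lra.
assert (0 <= (s-(7/20))^0 * ((211/400)-s)^4) by (apply Rmult_le_pos; apply pow_le; lra).
assert (0 <= (s-(7/20))^1 * ((211/400)-s)^3) by (apply Rmult_le_pos; apply pow_le; lra).
assert (0 <= (s-(7/20))^2 * ((211/400)-s)^2) by (apply Rmult_le_pos; apply pow_le; lra).
assert (0 <= (s-(7/20))^3 * ((211/400)-s)^1) by (apply Rmult_le_pos; apply pow_le; lra).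
assert (0 <= (s-(7/20))^4 * ((211/400)-s)^0) by (apply Rmult_le_pos; apply pow_le; lra).
lra. }
{ assert (0 <= s - (211/400)) by lra. assert (0 <= (141/200) - s) by lra.
assert (0 <= (s-(211/400))^0 * ((141/200)-s)^4) by (apply Rmult_le_pos; apply pow_le; lra).
assert (0 <= (s-(211/400))^1 * ((141/200)-s)^3) by (apply Rmult_le_pos; apply pow_le; lra).
assert (0 <= (s-(211/400))^2 * ((141/200)-s)^2) by (apply Rmult_le_pos; apply pow_le; lra).
assert (0 <= (s-(211/400))^3 * ((141/200)-s)^1) by (apply Rmult_le_pos; apply pow_le; lra).
assert (0 <= (s-(211/400))^4 * ((141/200)-s)^0) by (apply Rmult_le_pos; apply pow_le; lra).
lra. }
Qed.

Lemma LB_p2l (s : R) : (141/200) <= s <= (1) -> 0 <= ((8413/170000)*1 + (-1100987/3060000)*s + (1821353/3060000)*s*s + (-309959/1530000)*s*s*s + (-7747/95625)*s*s*s*s).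
Proof. intros.
assert (0 <= s - (141/200)) by lra. assert (0 <= (1) - s) by lra.
assert (0 <= (s-(141/200))^0 * ((1)-s)^4) by (apply Rmult_le_pos; apply pow_le; lra).
assert (0 <= (s-(141/200))^1 * ((1)-s)^3) by (apply Rmult_le_pos; apply pow_le; lra).
assert (0 <= (s-(141/200))^2 * ((1)-s)^2) by (apply Rmult_le_pos; apply pow_le; lra).
assert (0 <= (s-(141/200))^3 * ((1)-s)^1) by (apply Rmult_le_pos; apply pow_le; lra).
assert (0 <= (s-(141/200))^4 * ((1)-s)^0) by (apply Rmult_le_pos; apply pow_le; lra).
lra.
Qed.

Lemma LB_p2h (s : R) : (141/200) <= s <= (1) -> 0 <= ((13113/265000)*1 + (-190669/530000)*s + (39431/66250)*s*s + (-26843/132500)*s*s*s + (-2684/33125)*s*s*s*s).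
Proof. intros.
assert (0 <= s - (141/200)) by lra. assert (0 <= (1) - s) by lra.
assert (0 <= (s-(141/200))^0 * ((1)-s)^4) by (apply Rmult_le_pos; apply pow_le; lra).
assert (0 <= (s-(141/200))^1 * ((1)-s)^3) by (apply Rmult_le_pos; apply pow_le; lra).
assert (0 <= (s-(141/200))^2 * ((1)-s)^2) by (apply Rmult_le_pos; apply pow_le; lra).
assert (0 <= (s-(141/200))^3 * ((1)-s)^1) by (apply Rmult_le_pos; apply pow_le; lra).
assert (0 <= (s-(141/200))^4 * ((1)-s)^0) by (apply Rmult_le_pos; apply pow_le; lra).
lra.
Qed.

Lemma LA_br (t : R) : (139/1000) <= t <= (17/50) -> 0 <= ((-193/5000)*1 + (653/1000)*t + (-8741/5000)*t*t + (-357/2500)*t*t*t + (1369/625)*t*t*t*t + (0)*t*t*t*t*t + (357/625)*t*t*t*t*t*t).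
Proof. intros.
assert (0 <= t - (139/1000)) by lra. assert (0 <= (17/50) - t) by lra.
assert (0 <= (t-(139/1000))^0 * ((17/50)-t)^6) by (apply Rmult_le_pos; apply pow_le; lra).
assert (0 <= (t-(139/1000))^1 * ((17/50)-t)^5) by (apply Rmult_le_pos; apply pow_le; lra).
assert (0 <= (t-(139/1000))^2 * ((17/50)-t)^4) by (apply Rmult_le_pos; apply pow_le; lra).
assert (0 <= (t-(139/1000))^3 * ((17/50)-t)^3) by (apply Rmult_le_pos; apply pow_le; lra).
assert (0 <= (t-(139/1000))^4 * ((17/50)-t)^2) by (apply Rmult_le_pos; apply pow_le; lra).
assert (0 <= (t-(139/1000))^5 * ((17/50)-t)^1) by (apply Rmult_le_pos; apply pow_le; lra).
assert (0 <= (t-(139/1000))^6 * ((17/50)-t)^0) by (apply Rmult_le_pos; apply pow_le; lra).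
lra.
Qed.

Lemma LB_br (t : R) : (17/50) <= t <= (37/100) -> 0 <= ((-341/2000)*1 + (6751/5000)*t + (-14737/5000)*t*t + (244/625)*t*t*t + (3993/1250)*t*t*t*t + (0)*t*t*t*t*t + (-976/625)*t*t*t*t*t*t).
Proof. intros.
assert (0 <= t - (17/50)) by lra. assert (0 <= (37/100) - t) by lra.
assert (0 <= (t-(17/50))^0 * ((37/100)-t)^6) by (apply Rmult_le_pos; apply pow_le; lra).
assert (0 <= (t-(17/50))^1 * ((37/100)-t)^5) by (apply Rmult_le_pos; apply pow_le; lra).
assert (0 <= (t-(17/50))^2 * ((37/100)-t)^4) by (apply Rmult_le_pos; apply pow_le; lra).
assert (0 <= (t-(17/50))^3 * ((37/100)-t)^3) by (apply Rmult_le_pos; apply pow_le; lra).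
assert (0 <= (t-(17/50))^4 * ((37/100)-t)^2) by (apply Rmult_le_pos; apply pow_le; lra).
assert (0 <= (t-(17/50))^5 * ((37/100)-t)^1) by (apply Rmult_le_pos; apply pow_le; lra).
assert (0 <= (t-(17/50))^6 * ((37/100)-t)^0) by (apply Rmult_le_pos; apply pow_le; lra).
lra.
Qed.

Lemma CI_ql (t : R) : (37/100) <= t <= (1/2) -> 0 <= ((-179060/429777)*1 + (99944/429777)*t + (3844/2809)*t*t + (976376/429777)*t*t*t + (976376/429777)*t*t*t*t).
Proof. intros.
assert (0 <= t - (37/100)) by lra. assert (0 <= (1/2) - t) by lra.
assert (0 <= (t-(37/100))^0 * ((1/2)-t)^4) by (apply Rmult_le_pos; apply pow_le; lra).
assert (0 <= (t-(37/100))^1 * ((1/2)-t)^3) by (apply Rmult_le_pos; apply pow_le; lra).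
assert (0 <= (t-(37/100))^2 * ((1/2)-t)^2) by (apply Rmult_le_pos; apply pow_le; lra).
assert (0 <= (t-(37/100))^3 * ((1/2)-t)^1) by (apply Rmult_le_pos; apply pow_le; lra).
assert (0 <= (t-(37/100))^4 * ((1/2)-t)^0) by (apply Rmult_le_pos; apply pow_le; lra).
lra.
Qed.

Lemma CI_qh (t : R) : (37/100) <= t <= (1/2) -> 0 <= ((-62015/148877)*1 + (34596/148877)*t + (3844/2809)*t*t + (338272/148877)*t*t*t + (338272/148877)*t*t*t*t).
Proof. intros.
assert (0 <= t - (37/100)) by lra. assert (0 <= (1/2) - t) by lra.
assert (0 <= (t-(37/100))^0 * ((1/2)-t)^4) by (apply Rmult_le_pos; apply pow_le; lra).
assert (0 <= (t-(37/100))^1 * ((1/2)-t)^3) by (apply Rmult_le_pos; apply pow_le; lra).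
assert (0 <= (t-(37/100))^2 * ((1/2)-t)^2) by (apply Rmult_le_pos; apply pow_le; lra).
assert (0 <= (t-(37/100))^3 * ((1/2)-t)^1) by (apply Rmult_le_pos; apply pow_le; lra).
assert (0 <= (t-(37/100))^4 * ((1/2)-t)^0) by (apply Rmult_le_pos; apply pow_le; lra).
lra.
Qed.


Lemma affine_r (A B r : R) : 127/306 <= r <= 22/53 ->
  0 <= A + 127/306*B -> 0 <= A + 22/53*B -> 0 <= A + r*B.
Proof.
  intros Hr H1 H2.
  assert (0 <= (r - 127/306) * (A + 22/53*B)) by (apply Rmult_le_pos; lra).
  assert (0 <= (22/53 - r) * (A + 127/306*B)) by (apply Rmult_le_pos; lra).
  nra.
Qed.

Definition cub (a0 a1 a2 a3 s : R) := a0 + a1*s + a2*(s*s) + a3*(s*s*s).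
Definition LAc := cub (-185/10000) (3265/10000) (7618/10000) (-714/10000).
Definition LBc := cub (-846/10000) (6751/10000) (2130/10000) (1952/10000).

Lemma piece_to_rpow (L : R -> R) (s c K : R) : 0 < s < 1 -> 0 < c -> Rpower c rr = K ->
  0 <= K*(s*s) - L s + rr * (- L s * (c*s - 1)) -> L s <= Rpower s qq.
Proof.
  intros Hs Hc HK H. pose proof rr_lo. pose proof rr_hi.
  pose proof (anchor s c K Hs Hc HK) as A.
  assert (D: 0 < 1 + rr*(c*s-1)).
  { destruct (Rle_dec 1 (c*s)). nra. nra. }
  assert ((Rpower s qq - L s) * (1 + rr*(c*s-1)) >= 0) by nra.
  destruct (Rle_dec (L s) (Rpower s qq)); auto.
  assert (0 < (L s - Rpower s qq) * (1 + rr*(c*s-1))) by (apply Rmult_lt_0_compat; lra).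
  lra.
Qed.

Lemma K1 : Rpower 1 rr = 1.
Proof. unfold Rpower; rewrite ln_1, Rmult_0_r; apply exp_0. Qed.

Lemma LA_le (s : R) : 0 < s < 1 -> LAc s <= Rpower s qq.
Proof.
  intros Hs.
  destruct (Rle_dec s (35/100)).
  - apply (piece_to_rpow LAc _ 4 (16/9)); [lra | lra | exact Rpow4_rr |].
      apply affine_r; [pose proof rr_lo; pose proof rr_hi; lra | |].
      { pose proof (LA_p0l s ltac:(lra)). unfold LAc, cub in *. lra. }
      { pose proof (LA_p0h s ltac:(lra)). unfold LAc, cub in *. lra. }
  - destruct (Rle_dec s (705/1000)).
    + apply (piece_to_rpow LAc _ 2 (4/3)); [lra | lra | exact Rpow2_rr |].
      apply affine_r; [pose proof rr_lo; pose proof rr_hi; lra | |].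
      { pose proof (LA_p1l s ltac:(lra)). unfold LAc, cub in *. lra. }
      { pose proof (LA_p1h s ltac:(lra)). unfold LAc, cub in *. lra. }
    + apply (piece_to_rpow LAc _ 1 (1)); [lra | lra | exact K1 |].
      apply affine_r; [pose proof rr_lo; pose proof rr_hi; lra | |].
      { pose proof (LA_p2l s ltac:(lra)). unfold LAc, cub in *. lra. }
      { pose proof (LA_p2h s ltac:(lra)). unfold LAc, cub in *. lra. }
Qed.

Lemma LB_le (s : R) : 0 < s < 1 -> LBc s <= Rpower s qq.
Proof.
  intros Hs.
  destruct (Rle_dec s (35/100)).
  - apply (piece_to_rpow LBc _ 4 (16/9)); [lra | lra | exact Rpow4_rr |].
      apply affine_r; [pose proof rr_lo; pose proof rr_hi; lra | |].
      { pose proof (LB_p0l s ltac:(lra)). unfold LBc, cub in *. lra. }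
      { pose proof (LB_p0h s ltac:(lra)). unfold LBc, cub in *. lra. }
  - destruct (Rle_dec s (705/1000)).
    + apply (piece_to_rpow LBc _ 2 (4/3)); [lra | lra | exact Rpow2_rr |].
      apply affine_r; [pose proof rr_lo; pose proof rr_hi; lra | |].
      { pose proof (LB_p1l s ltac:(lra)). unfold LBc, cub in *. lra. }
      { pose proof (LB_p1h s ltac:(lra)). unfold LBc, cub in *. lra. }
    + apply (piece_to_rpow LBc _ 1 (1)); [lra | lra | exact K1 |].
      apply affine_r; [pose proof rr_lo; pose proof rr_hi; lra | |].
      { pose proof (LB_p2l s ltac:(lra)). unfold LBc, cub in *. lra. }
      { pose proof (LB_p2h s ltac:(lra)). unfold LBc, cub in *. lra. }
Qed.

Lemma caseII (x y z t : R) : 0 < x < 1 -> 0 < y < 1 -> 0 < z < 1 ->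
  x*x+y*y+z*z+2*x*y*z = 1 -> 139/1000 <= t <= 37/100 -> x+y+z = 1 + 2*t - 2*t*t ->
  Rpower x qq + Rpower y qq + Rpower z qq >= 1.
Proof.
  intros Hx Hy Hz C Ht Hp.
  assert (Hw: x*y*z <= t*t*(1-2*t*t)) by (apply w_le; auto; lra).
  assert (Hp2: x+y+z <= 3/2) by (apply p_le; auto).
  assert (Hp1: 1 <= x+y+z) by (apply p_ge; auto).
  destruct (Rle_dec t (34/100)).
  - pose proof (LA_le x Hx). pose proof (LA_le y Hy). pose proof (LA_le z Hz).
    pose proof (sym_cubic (-185/10000) (3265/10000) (7618/10000) (-714/10000) x y z t C Hp) as S.
    pose proof (LA_br t ltac:(lra)).
    assert (0 <= (t*t*(1-2*t*t) - x*y*z) * (2*(7618/10000) + 3*(-714/10000)*((x+y+z)-1)))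
      by (apply Rmult_le_pos; lra).
    unfold LAc, cub in *. lra.
  - pose proof (LB_le x Hx). pose proof (LB_le y Hy). pose proof (LB_le z Hz).
    pose proof (sym_cubic (-846/10000) (6751/10000) (2130/10000) (1952/10000) x y z t C Hp) as S.
    pose proof (LB_br t ltac:(lra)).
    assert (0 <= (t*t*(1-2*t*t) - x*y*z) * (2*(2130/10000) + 3*(1952/10000)*((x+y+z)-1)))
      by (apply Rmult_le_pos; lra).
    unfold LBc, cub in *. lra.
Qed.

Definition kap := (31/53)*(31/53).
Definition Gr (r u : R) := 1 + (2-r)*u + kap*(u*u) - kap*r*(u*u*u).

Lemma gI (x : R) : 0 < x < 1 -> Rpower x qq >= (1/3) * Gr rr (2*x-1).
Proof.
  intros Hx. pose proof rr_lo. pose proof rr_hi.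
  pose proof (anchor x 2 (4/3) Hx ltac:(lra) Rpow2_rr) as A.
  replace (1*2*x-1) with (2*x-1) in A by ring.
  remember (2*x-1) as u eqn:Hu.
  assert (D: 0 < 1 + rr*u) by nra.
  assert (Id: (1+u)*(1+u) - Gr rr u * (1 + rr*u) = ((1-rr)*(1-rr) - kap)*(u*u) + kap*(rr*rr)*(u*u*u*u))
    by (unfold Gr; ring).
  assert (Hk: kap <= (1-rr)*(1-rr)) by (unfold kap; nra).
  assert (0 <= ((1-rr)*(1-rr) - kap)*(u*u)) by (apply Rmult_le_pos; nra).
  assert (0 <= kap*(rr*rr)*(u*u*u*u)) by (unfold kap; apply Rmult_le_pos; [nra | nra]).
  assert (E: (4/3)*(x*x) = (1/3)*((1+u)*(1+u))) by (subst u; field).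
  assert ((Rpower x qq - (1/3)*Gr rr u) * (1+rr*u) >= 0) by nra.
  destruct (Rle_dec ((1/3)*Gr rr u) (Rpower x qq)); [lra|].
  assert (0 < ((1/3)*Gr rr u - Rpower x qq) * (1+rr*u)) by (apply Rmult_lt_0_compat; lra).
  lra.
Qed.

Lemma caseI (x y z t : R) : 0 < x < 1 -> 0 < y < 1 -> 0 < z < 1 ->
  x*x+y*y+z*z+2*x*y*z = 1 -> 37/100 <= t <= 1/2 -> x+y+z = 1 + 2*t - 2*t*t ->
  Rpower x qq + Rpower y qq + Rpower z qq >= 1.
Proof.
  intros Hx Hy Hz C Ht Hp.
  pose proof rr_lo as R1. pose proof rr_hi as R2.
  assert (Hw: x*y*z <= t*t*(1-2*t*t)) by (apply w_le; auto; lra).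
  assert (Hp2: x+y+z <= 3/2) by (apply p_le; auto).
  assert (Hp1: 1 <= x+y+z) by (apply p_ge; auto).
  pose proof (gI x Hx). pose proof (gI y Hy). pose proof (gI z Hz).
  set (a0 := (1/3)*(1 - (2-rr) + kap + kap*rr)).
  set (a1 := (1/3)*(2*(2-rr) - 4*kap - 6*kap*rr)).
  set (a2 := (1/3)*(4*kap + 12*kap*rr)).
  set (a3 := (1/3)*(-8*kap*rr)).
  assert (Gx: forall s, (1/3)*Gr rr (2*s-1) = a0 + a1*s + a2*(s*s) + a3*(s*s*s))
    by (intros; unfold Gr, a0, a1, a2, a3; field).
  pose proof (sym_cubic a0 a1 a2 a3 x y z t C Hp) as S.
  rewrite <- !Gx in S.
  assert (Hk: 0 < kap) by (unfold kap; lra).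
  assert (Hc: 0 <= 2*a2 + 3*a3*((x+y+z)-1)).
  { unfold a2, a3. assert (0 <= kap*rr) by nra. nra. }
  assert (0 <= (t*t*(1-2*t*t) - x*y*z) * (2*a2 + 3*a3*((x+y+z)-1))) by (apply Rmult_le_pos; lra).
  assert (Br: 0 <= Gr rr (2*(1-2*t*t)-1) + 2*Gr rr (2*t-1) - 3).
  { set (U := 2*(1-2*t*t)-1). set (V := 2*t-1).
    assert (E: Gr rr U + 2*Gr rr V - 3 =
      ((1 + 2*U + kap*(U*U)) + 2*(1 + 2*V + kap*(V*V)) - 3) + rr * ((-U - kap*(U*U*U)) + 2*(-V - kap*(V*V*V))))
      by (unfold Gr; ring).
    rewrite E. apply affine_r; [lra| |].
    - pose proof (CI_ql t Ht) as Q.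
      match type of Q with 0 <= ?e => assert (0 <= (1-2*t)^2 * e) by (apply Rmult_le_pos; [apply pow2_ge_0 | exact Q]) end.
      unfold U, V, kap. lra.
    - pose proof (CI_qh t Ht) as Q.
      match type of Q with 0 <= ?e => assert (0 <= (1-2*t)^2 * e) by (apply Rmult_le_pos; [apply pow2_ge_0 | exact Q]) end.
      unfold U, V, kap. lra. }
  lra.
Qed.

Lemma key (x y z : R) : 0 < x < 1 -> 0 < y < 1 -> 0 < z < 1 ->
  x*x+y*y+z*z+2*x*y*z = 1 ->
  Rpower x qq + Rpower y qq + Rpower z qq >= 1.
Proof.
  intros Hx Hy Hz C.
  assert (Sym: 124/100 <= x+y+z ->
     Rpower x qq + Rpower y qq + Rpower z qq >= 1).
  { intros Hb.
    assert (Hp2: x+y+z <= 3/2) by (apply p_le; auto).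
    assert (Hp1: 1 <= x+y+z) by (apply p_ge; auto).
    destruct (tparam (x+y+z) ltac:(lra)) as [t [Ht Hpt]].
    assert (Ht2: 139/1000 <= t).
    { destruct (Rle_dec (139/1000) t); auto.
      assert (0 <= (139/1000 - t)*(1 - 139/1000 - t)) by (apply Rmult_le_pos; lra).
      nra. }
    destruct (Rle_dec (37/100) t).
    - apply (caseI x y z t); auto; lra.
    - apply (caseII x y z t); auto; lra. }
  destruct (Rle_dec x (29/100)); destruct (Rle_dec y (29/100)); destruct (Rle_dec z (29/100)).
  - apply corner; auto; lra.
  - assert (H := corner z x y Hz ltac:(lra) ltac:(lra) ltac:(lra)). lra.
  - assert (H := corner y x z Hy ltac:(lra) ltac:(lra) ltac:(lra)). lra.
  - apply Sym. assert (H := two_big y z x ltac:(lra) ltac:(lra) Hx ltac:(lra)). lra.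
  - apply corner; auto; lra.
  - apply Sym. assert (H := two_big x z y ltac:(lra) ltac:(lra) Hy ltac:(lra)). lra.
  - apply Sym. assert (H := two_big x y z ltac:(lra) ltac:(lra) Hz ltac:(lra)). lra.
  - apply Sym. assert (H := two_big x y z ltac:(lra) ltac:(lra) Hz ltac:(lra)). lra.
Qed.

Lemma sin_in (e : R) : 0 < e < PI/2 -> 0 < sin e < 1.
Proof.
  intros He. pose proof PI_RGT_0.
  split. apply sin_gt_0; lra.
  pose proof (cos_gt_0 e ltac:(lra) ltac:(lra)).
  pose proof (sin2_cos2 e). unfold Rsqr in *.
  destruct (Rlt_le_dec (sin e) 1); auto. nra.
Qed.

Lemma rpow_mono (s p : R) : 0 < s < 1 -> p <= qq -> Rpower s qq <= Rpower s p.
Proof.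
  intros Hs Hp. unfold Rpower.
  assert (ln s < 0) by (rewrite <- ln_1; apply ln_increasing; lra).
  destruct (Rle_lt_or_eq_dec p qq Hp).
  - left. apply exp_increasing. nra.
  - subst. lra.
Qed.

Theorem lemma2p9 (p e1 e2 e3 : R)
  (hp1 : 1 <= p) (hp2 : p <= ln 3 / ln 2)
  (he1 : 0 < e1 < PI / 2) (he2 : 0 < e2 < PI / 2) (he3 : 0 < e3 < PI / 2)
  (hsum : e1 + e2 + e3 = PI / 2) :
  Rpower (sin e1) p + Rpower (sin e2) p + Rpower (sin e3) p >= 1.
Proof.
  pose proof (sin_in e1 he1) as H1. pose proof (sin_in e2 he2) as H2. pose proof (sin_in e3 he3) as H3.
  assert (C: sin e1 * sin e1 + sin e2 * sin e2 + sin e3 * sin e3 + 2 * sin e1 * sin e2 * sin e3 = 1).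
  { assert (E: sin e3 = cos e1 * cos e2 - sin e1 * sin e2).
    { replace e3 with (PI/2 - (e1+e2)) by lra. rewrite sin_shift, cos_plus. ring. }
    pose proof (sin2_cos2 e1). pose proof (sin2_cos2 e2). unfold Rsqr in *.
    rewrite E. nra. }
  pose proof (key _ _ _ H1 H2 H3 C).
  assert (hq: p <= qq) by (unfold qq; exact hp2).
  pose proof (rpow_mono _ p H1 hq). pose proof (rpow_mono _ p H2 hq). pose proof (rpow_mono _ p H3 hq).
  lra.
Qed.
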